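(* Let $\mathcal X=\{\vec x^{(1)},\dots,\vec x^{(M)}\}\subset\mathbb{R}^d$. Let $U\subseteq\mathcal P([d])$, for each $\vec w\in U$ let $\mathcal I_{\vec w}$ be a finite set of frequency vectors $\vec\omega\in\mathbb{R}^d$ with $\operatorname{supp}\vec\omega=\vec w$, and let $a^\#_{\vec\omega}\in\mathbb{C}$ be coefficients. Fix $\vec u\in U$ such that no $\vec v\in U$ satisfies $\vec u\subsetneq\vec v$, and set $g(\vec x_{\vec u})=\sum_{\vec\omega\in\mathcal I_{\vec u}}a^\#_{\vec\omega}\mathrm{e}^{\mathrm{i}\langle\vec\omega_{\vec u},\vec x_{\vec u}\rangle}$. Define Monte-Carlo ANOVA terms of $g$ recursively by $$g^{\mathrm{MC}}_\varnothing=\frac1M\sum_{j=1}^M g(\vec x^{(j)}_{\vec u}),\qquad g^{\mathrm{MC}}_{\vec v}(\vec x_{\vec v})=\frac1M\sum_{j=1}^M g\big(\vec x_{\vec v},\vec x^{(j)}_{\vec u\setminus\vec v}\big)-\sum_{\vec v'\subsetneq\vec v}g^{\mathrm{MC}}_{\vec v'}(\vec x_{\vec v'})\quad(\varnothing\neq\vec v\subseteq\vec u).$$ Then $g^{\mathrm{MC}}_\varnothing=\frac1M\sum_{\vec\omega\in\mathcal I_{\vec u}}a^\#_{\vec\omega}\sum_{j=1}^M\mathrm{e}^{\mathrm{i}\langle\vec x^{(j)},\vec\omega\rangle}$ and, for every $\vec v\subseteq\vec u$, $$g^{\mathrm{MC}}_{\vec v}(\vec x_{\vec v})=\frac1M\sum_{\vec\omega\in\mathcal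 I_{\vec u}}a^\#_{\vec\omega}\sum_{j=1}^M\mathrm{e}^{\mathrm{i}\langle\vec x^{(j)}_{\vec u\setminus\vec v},\vec\omega_{\vec u\setminus\vec v}\rangle}\prod_{i\in\vec v}\left(\mathrm{e}^{\mathrm{i}x_i\omega_i}-\mathrm{e}^{\mathrm{i}x^{(j)}_i\omega_i}\right).$$
   Context: $[d]=\{1,\dots,d\}$, $\mathcal P([d])$ its power set, $\vec x_{\vec v}=(x_i)_{i\in\vec v}$; $g(\vec x_{\vec v},\vec x^{(j)}_{\vec u\setminus\vec v})$ means $g$ evaluated at the point whose coordinates in $\vec v$ are those of $\vec x$ and whose coordinates in $\vec u\setminus\vec v$ are those of $\vec x^{(j)}$. *)

(* Defs.v *)
From HB Require Import structures.
From mathcomp Require Import all_boot all_order all_algebra.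
From mathcomp Require Import all_classical all_reals all_analysis.
From mathcomp Require Import complex.
Set Implicit Arguments. Unset Strict Implicit. Unset Printing Implicit Defensive.
Import Order.TTheory GRing.Theory Num.Theory.
Local Open Scope ring_scope.

Section Defs.
Variables (R : realType) (d M : nat).

Definition expi (t : R) : R[i] := Complex (cos t) (sin t).

Definition cR (t : R) : R[i] := Complex t 0.

Notation pt := ('I_d -> R).

Definition supp (om : 'rV[R]_d) : {set 'I_d} := [set i | om ord0 i != 0].

Definition mix (v : {set 'I_d}) (x y : pt) : pt :=
  fun i => if i \in v then x i else y i.

Definition gfun (u : {set 'I_d}) (I : seq 'rV[R]_d) (a : 'rV[R]_d -> R[i])
  (x : pt) : R[i] :=
  \sum_(om <- I) a om * expi (\sum_(i in u) om ord0 i * x i).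

(* Monte-Carlo ANOVA terms, defined by the recursion of the paper with a
   fuel parameter n (any n >= #|v| gives the intended value). *)
Fixpoint mc_fuel (g : pt -> R[i]) (X : 'I_M -> pt) (n : nat)
  (v : {set 'I_d}) (x : pt) : R[i] :=
  (cR M%:R)^-1 * \sum_(j < M) g (mix v x (X j)) -
  match n with
  | 0 => 0
  | n'.+1 => \sum_(v' : {set 'I_d} | v' \proper v) mc_fuel g X n' v' x
  end.

Definition gMC (g : pt -> R[i]) (X : 'I_M -> pt) (v : {set 'I_d}) (x : pt)
  : R[i] := mc_fuel g X #|v| v x.

End Defs.

(* Main.v *)
Require Import Defs.
From HB Require Import structures.
From mathcomp Require Import all_boot all_order all_algebra.
From mathcomp Require Import all_classical all_reals all_analysis.
From mathcomp Require Import complex.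
Import Order.TTheory GRing.Theory Num.Theory.
Local Open Scope ring_scope.

Lemma expiD (R : realType) (a b : R) : expi (a + b) = expi a * expi b.
Proof. by rewrite /expi sinD cosD [RHS]/GRing.mul /= [X in _ = Complex _ X]addrC. Qed.

Lemma expi0 (R : realType) : expi (0 : R) = 1.
Proof. by rewrite /expi sin0 cos0. Qed.

Lemma expi_sum (R : realType) (T : finType) (P : pred T) (F : T -> R) :
  expi (\sum_(i | P i) F i) = \prod_(i | P i) expi (F i).
Proof. exact: (big_morph _ (@expiD R) (@expi0 R)). Qed.

Lemma prod_split (C : comNzRingType) (T : finType) (v : {set T}) (F G : T -> C) :
  \prod_(i in v) (F i + G i) =
  \sum_(w : {set T} | w \subset v) \prod_(i in w) F i * \prod_(i in v :\: w) G i.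
Proof.
rewrite big_mkcond /=.
rewrite (eq_bigr (fun i => (if i \in v then F i else 0) + (if i \in v then G i else 1))); last first.
  by move=> i _; case: ifP; rewrite ?addr0 ?add0r.
rewrite (@bigA_distr C 0 1 *%R +%R T) (bigID (fun w : {set T} => w \subset v)) /=.
rewrite [X in _ + X]big1 ?addr0; last first.
  move=> w /subsetPn [i iw iv].
  by rewrite (bigD1 i) //= iw (negbTE iv) mul0r.
apply: eq_bigr => w wv.
rewrite [\prod_(i in w) _]big_mkcond [\prod_(i in v :\: w) _]big_mkcond -big_split /=.
apply: eq_bigr => i _; rewrite !inE.
case iw: (i \in w) => /=.
  by rewrite (fintype.subsetP wv _ iw) mulr1.
by rewrite mul1r.
Qed.
Lemma mc_fuel_stable (R : realType) (d M : nat) (g : ('I_d -> R) -> R[i])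
  (X : 'I_M -> 'I_d -> R) :
  forall n m (v : {set 'I_d}) x, (#|v| <= n)%N -> (#|v| <= m)%N ->
  mc_fuel g X n v x = mc_fuel g X m v x.
Proof.
have noprop : forall (v : {set 'I_d}) k, (#|v| <= k)%N ->
    forall w : {set 'I_d}, w \proper v -> (#|w| < k)%N.
  by move=> v k hk w /proper_card h; apply: leq_trans h hk.
elim=> [|n IH] [|m] v x hn hm //=.
- congr (_ - _); rewrite big_pred0 // => w; apply/negbTE/negP => /(noprop _ _ hn).
  by rewrite ltn0.
- congr (_ - _); rewrite big_pred0 // => w; apply/negbTE/negP => /(noprop _ _ hm).
  by rewrite ltn0.
- congr (_ - _); apply: eq_bigr => w hw; apply: IH.
  + by have := noprop _ _ hn _ hw.
  + by have := noprop _ _ hm _ hw.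
Qed.

Lemma point (R : realType) (d : nat) (u v : {set 'I_d}) (om : 'rV[R]_d)
  (x y : 'I_d -> R) :
  v \subset u ->
  expi (\sum_(i in u) om ord0 i * mix v x y i) =
  \sum_(w : {set 'I_d} | w \subset v)
     expi (\sum_(i in u :\: w) y i * om ord0 i) *
     \prod_(i in w) (expi (x i * om ord0 i) - expi (y i * om ord0 i)).
Proof.
move=> vu.
rewrite expi_sum (big_setID v) /= (finset.setIidPr vu).
rewrite (eq_bigr (fun i => expi (x i * om ord0 i) - expi (y i * om ord0 i)
                            + expi (y i * om ord0 i))); last first.
  by move=> i iv; rewrite subrK /mix iv mulrC.
rewrite [X in _ * X](eq_bigr (fun i => expi (y i * om ord0 i))); last first.
  by move=> i; rewrite inE => /andP[/negbTE iv _]; rewrite /mix iv mulrC.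
rewrite prod_split mulr_suml; apply: eq_bigr => w wv.
rewrite expi_sum -mulrA [RHS]mulrC; congr (_ * _).
have e1 : (u :\: w) :&: v = v :\: w.
  apply/setP => i; rewrite !inE; case: (boolP (i \in v)) => iv; rewrite ?andbF //.
  by rewrite (fintype.subsetP vu _ iv) !andbT.
have e2 : (u :\: w) :\: v = u :\: v.
  apply/setP => i; rewrite !inE; case: (boolP (i \in v)) => iv //=.
  have -> // : i \notin w by apply: contra iv => /(fintype.subsetP wv).
by rewrite [RHS](big_setID v) /= e1 e2.
Qed.

Theorem lemma5p1 (R : realType) (d M : nat) (X : 'I_M -> 'I_d -> R)
  (U : {set {set 'I_d}}) (I : {set 'I_d} -> seq 'rV[R]_d)
  (a : 'rV[R]_d -> R[i]) (u : {set 'I_d}) :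
  (0 < M)%N ->
  injective X ->
  (forall w, w \in U -> uniq (I w)) ->
  (forall w, w \in U -> forall om, om \in I w -> supp om = w) ->
  u \in U ->
  (forall v, v \in U -> ~~ (u \proper v)) ->
  let g := gfun u (I u) a in
  (forall x : 'I_d -> R,
     gMC g X finset.set0 x =
     (cR M%:R)^-1 * \sum_(om <- I u) a om *
        \sum_(j < M) expi (\sum_(i < d) X j i * om ord0 i)) /\
  (forall (v : {set 'I_d}) (x : 'I_d -> R), v \subset u ->
     gMC g X v x =
     (cR M%:R)^-1 * \sum_(om <- I u) a om *
        \sum_(j < M) (expi (\sum_(i in u :\: v) X j i * om ord0 i) *
          \prod_(i in v) (expi (x i * om ord0 i) - expi (X j i * om ord0 i)))).
Proof.
move=> M0 Xinj Iuniq Isupp uU umax g.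
pose F := fun (v : {set 'I_d}) (x : 'I_d -> R) =>
     (cR M%:R)^-1 * \sum_(om <- I u) a om *
        \sum_(j < M) (expi (\sum_(i in u :\: v) X j i * om ord0 i) *
          \prod_(i in v) (expi (x i * om ord0 i) - expi (X j i * om ord0 i))).
have hsum : forall (v : {set 'I_d}) (x : 'I_d -> R), v \subset u ->
    (cR M%:R)^-1 * \sum_(j < M) g (mix v x (X j)) =
    \sum_(w : {set 'I_d} | w \subset v) F w x.
  move=> v x vu; rewrite /F -mulr_sumr; congr (_ * _).
  rewrite /g /gfun exchange_big /= [RHS]exchange_big /=.
  apply: eq_bigr => om _.
  rewrite -mulr_sumr -[RHS]mulr_sumr; congr (_ * _).
  rewrite [RHS]exchange_big /=; apply: eq_bigr => j _; exact: point.
have step : forall (v : {set 'I_d}) (x : 'I_d -> R), v \subset u ->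
    (forall w : {set 'I_d}, w \proper v -> gMC g X w x = F w x) -> gMC g X v x = F v x.
  move=> v x vu IH.
  have hsum' := hsum v x vu; rewrite (bigD1 v) //= in hsum'.
  have hprop : \sum_(w : {set 'I_d} | (w \subset v) && (w != v)) F w x =
               \sum_(w : {set 'I_d} | w \proper v) gMC g X w x.
    apply: eq_big => w; first by rewrite finset.properEneq andbC.
    by move=> /andP[wv wnv]; rewrite IH // finset.properEneq wnv wv.
  rewrite /gMC; case E: #|v| => [|c] /=.
    move/cards0_eq: E => v0; subst v.
    rewrite subr0 hsum' [X in _ + X]big_pred0 ?addr0 // => w.
    by rewrite finset.subset0 andbN.
  rewrite hsum' hprop [X in _ - X](eq_bigr (fun w => gMC g X w x)) ?addrK //.
  move=> w hw; rewrite /gMC; apply: mc_fuel_stable => //.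
  by have := proper_card hw; rewrite E.
have main : forall k (v : {set 'I_d}) (x : 'I_d -> R), (#|v| <= k)%N -> v \subset u -> gMC g X v x = F v x.
  elim=> [|k IHk] v x hk vu; apply: step => // w hw.
    by have := proper_card hw; rewrite ltnNge (leq_trans hk (leq0n _)).
  apply: IHk; last by exact: fintype.subset_trans (proper_sub hw) vu.
  by have := proper_card hw => h; rewrite -ltnS (leq_trans h hk).
split; last by move=> v x vu; exact: main.
move=> x; rewrite (main #|finset.set0 : {set 'I_d}|) ?finset.sub0set // /F.
congr (_ * _); apply: eq_big_seq => om hom; congr (_ * _).
apply: eq_bigr => j _; rewrite big_set0 mulr1 finset.setD0; congr expi.
rewrite [RHS](bigID (mem u)) /= [X in _ = _ + X]big1 ?addr0 //.
move=> i iu; have := Isupp u uU om hom; rewrite /supp => /setP /(_ i).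
by rewrite inE (negbTE iu) => /negbFE /eqP ->; rewrite mulr0.
Qed.
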